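(* Let $\kappa>0$, $m>0$, and let $L_{\kappa,m}$ be as in the context. Suppose $\delta\in(0,1)$ and $0<\rho_1<\rho_2<\min\{R_\kappa,m\delta\}$. Then with $\beta=\sqrt{1-\delta^2}$, \[\frac{L_{\kappa,m}(\rho_2)}{L_{\kappa,m}(\rho_1)}\ge\frac12\left[\left(\frac{\rho_2}{\rho_1}\right)^{\beta m}-\left(\frac{\rho_2}{\rho_1}\right)^{-\beta m}\right].\]
   Context: For $\kappa>0$: $\sin_\kappa(\rho)=\sin(\sqrt{\kappa}\rho)/\sqrt{\kappa}$, $\cos_\kappa=(\sin_\kappa)'$, $R_\kappa=\pi/(2\sqrt{\kappa})$. $L_{\kappa,m}$ is a solution of \[\sin_\kappa^2(\rho)L''(\rho)+\sin_\kappa(\rho)\cos_\kappa(\rho)L'(\rho)+(\sin_\kappa^2(\rho)-m^2)L(\rho)=0\] that is well defined (regular) at $\rho=0$ and positive on some interval $(0,\varepsilon)$. *)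

(* Defs.v *)
From Stdlib Require Import Reals.
From Coquelicot Require Import Coquelicot.
Open Scope R_scope.

Definition sin_k (kappa rho : R) : R := sin (sqrt kappa * rho) / sqrt kappa.
Definition cos_k (kappa rho : R) : R := cos (sqrt kappa * rho).
Definition R_k (kappa : R) : R := PI / (2 * sqrt kappa).

Definition is_L (kappa m : R) (L : R -> R) : Prop :=
  (exists dL ddL : R -> R,
      forall rho, 0 < rho < R_k kappa ->
        is_derive L rho (dL rho) /\ is_derive dL rho (ddL rho) /\
        (sin_k kappa rho)^2 * ddL rho
        + sin_k kappa rho * cos_k kappa rho * dL rho
        + ((sin_k kappa rho)^2 - m^2) * L rho = 0)
  /\ filterlim L (at_right 0) (locally (L 0))
  /\ (exists eps, 0 < eps /\ forall rho, 0 < rho < eps -> 0 < L rho).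

(* Main.v *)
Require Import Defs.
From Stdlib Require Import Reals Lra.
From Coquelicot Require Import Coquelicot.
Open Scope R_scope.

Lemma cont_eps f x : continuity_pt f x -> forall e, 0 < e ->
  exists d, 0 < d /\ forall y, Rabs (y - x) < d -> Rabs (f y - f x) < e.
Proof.
  intros H e He; destruct (H e He) as [d [Hd H']]; exists d; split; auto.
  intros y Hy. destruct (Req_dec y x) as [->|Hne].
  - rewrite Rminus_eq_0, Rabs_R0; lra.
  - apply (H' y). split; [split; [exact I| auto] | exact Hy].
Qed.

Lemma first_point f a b : a < b -> (forall x, a <= x <= b -> continuity_pt f x) ->
  0 < f a -> f b <= 0 ->
  exists z, a < z <= b /\ f z <= 0 /\ (forall t, a <= t < z -> 0 < f t).
Proof.
  intros Hab Hc Ha Hb.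
  set (E := fun t => a <= t <= b /\ forall s, a <= s <= t -> 0 < f s).
  assert (HbE : bound E) by (exists b; intros t [Ht _]; lra).
  assert (HaE : exists x, E x).
  { exists a; split; [lra|]. intros s Hs; replace s with a by lra; auto. }
  destruct (completeness E HbE HaE) as [z [Hub Hlub]].
  assert (Hza : a <= z) by (apply Hub; destruct HaE; split; [lra|intros s Hs; replace s with a by lra; auto]).
  assert (Hzb : z <= b) by (apply Hlub; intros t [Ht _]; lra).
  assert (Hleft : forall t, a <= t < z -> 0 < f t).
  { intros t Ht. destruct (Rlt_or_le 0 (f t)) as [H|H]; auto.
    exfalso. assert (z <= t); [|lra]. apply Hlub. intros e [He1 He2].
    destruct (Rlt_or_le e t) as [|Hte]; [lra|]. specialize (He2 t); lra. }
  assert (Hfz : f z <= 0).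
  { destruct (Rlt_or_le 0 (f z)) as [H|H]; auto. exfalso.
    destruct (cont_eps f z (Hc z (conj Hza Hzb)) (f z) H) as [d [Hd Hd']].
    destruct (Req_dec z b) as [->|Hne]; [lra|].
    set (t := Rmin (z + d/2) b).
    assert (Ht1 : z < t) by (unfold t; apply Rmin_glb_lt; lra).
    assert (Ht2 : t <= z + d/2) by (apply Rmin_l).
    assert (Ht3 : t <= b) by (apply Rmin_r).
    assert (E t).
    { split; [lra|]. intros s Hs. destruct (Rlt_or_le s z); [apply Hleft; lra|].
      assert (Rabs (f s - f z) < f z) by (apply Hd'; apply Rabs_def1; lra).
      apply Rabs_def2 in H1; lra. }
    apply Hub in H0; lra. }
  exists z; split; [|split; auto].
  split; auto. destruct (Req_dec a z) as [<-|]; [lra|lra].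
Qed.

Lemma last_point f a b : a < b -> (forall x, a <= x <= b -> continuity_pt f x) ->
  f a <= 0 -> 0 < f b ->
  exists z, a <= z < b /\ f z <= 0 /\ (forall t, z < t <= b -> 0 < f t).
Proof.
  intros Hab Hc Ha Hb.
  set (E := fun t => a <= t <= b /\ f t <= 0).
  assert (HbE : bound E) by (exists b; intros t [Ht _]; lra).
  assert (HaE : exists x, E x) by (exists a; split; [lra|auto]).
  destruct (completeness E HbE HaE) as [z [Hub Hlub]].
  assert (Hza : a <= z) by (apply Hub; split; [lra|auto]).
  assert (Hzb : z <= b) by (apply Hlub; intros t [Ht _]; lra).
  assert (Hright : forall t, z < t <= b -> 0 < f t).
  { intros t Ht. destruct (Rlt_or_le 0 (f t)) as [H|H]; auto.
    exfalso. assert (t <= z) by (apply Hub; split; [lra|auto]). lra. }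
  assert (Hfz : f z <= 0).
  { destruct (Rlt_or_le 0 (f z)) as [H|H]; auto. exfalso.
    destruct (cont_eps f z (Hc z (conj Hza Hzb)) (f z) H) as [d [Hd Hd']].
    assert (z <= z - d/2); [|lra]. apply Hlub. intros e [He1 He2].
    destruct (Rle_or_lt e (z - d/2)); auto. exfalso.
    assert (e <= z) by (apply Hub; split; auto).
    assert (Rabs (f e - f z) < f z) by (apply Hd'; apply Rabs_def1; lra).
    apply Rabs_def2 in H2; lra. }
  exists z; split; [|split; auto].
  split; auto. destruct (Req_dec z b) as [->|]; lra.
Qed.

Lemma mvt f df a b : a < b -> (forall x, a <= x <= b -> is_derive f x (df x)) ->
  exists c, a < c < b /\ f b - f a = df c * (b - a).
Proof.
  intros Hab H. destruct (MVT_cor2 f df a b Hab) as [c [Hc1 Hc2]].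
  - intros c Hc. apply is_derive_Reals; auto.
  - exists c; auto.
Qed.

Lemma der_cont f x l : is_derive f x l -> continuity_pt f x.
Proof.
  intros H. apply derivable_continuous_pt. exists l. apply is_derive_Reals; auto.
Qed.

Lemma der_mul f g x df dg : is_derive f x df -> is_derive g x dg ->
  is_derive (fun t => f t * g t) x (df * g x + f x * dg).
Proof.
  intros H1 H2. apply is_derive_Reals. apply is_derive_Reals in H1, H2.
  exact (derivable_pt_lim_mult f g x df dg H1 H2).
Qed.

Lemma der_minus f g x df dg : is_derive f x df -> is_derive g x dg ->
  is_derive (fun t => f t - g t) x (df - dg).
Proof.
  intros H1 H2. apply is_derive_Reals. apply is_derive_Reals in H1, H2.
  exact (derivable_pt_lim_minus f g x df dg H1 H2).
Qed.

Lemma der_pow a x : 0 < x -> is_derive (fun t => exp (a * ln t)) x (exp (a * ln x) * (a / x)).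
Proof. intros Hx. auto_derive; [lra|]. field. lra. Qed.

Lemma der_npow a x : 0 < x -> is_derive (fun t => exp (- (a * ln t))) x (exp (- (a * ln x)) * (- (a / x))).
Proof. intros Hx. auto_derive; [lra|]. field. lra. Qed.

Lemma pow_mono a x y : 0 <= a -> 0 < x <= y -> exp (a * ln x) <= exp (a * ln y).
Proof.
  intros Ha Hxy. assert (ln x <= ln y) by (apply ln_le; lra).
  assert (a * ln x <= a * ln y) by (apply Rmult_le_compat_l; lra).
  destruct H0 as [H0|H0]; [left; apply exp_increasing; auto| rewrite H0; lra].
Qed.

Lemma pow_small a B y : 0 < a -> 0 < B -> 0 < y -> exists x, 0 < x < y /\ exp (a * ln x) < B.
Proof.
  intros Ha HB Hy. set (x := Rmin (y/2) (exp (ln B / a) / 2)).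
  assert (He := exp_pos (ln B / a)).
  assert (Hx1 : 0 < x) by (apply Rmin_glb_lt; lra).
  assert (Hx2 : x <= y/2) by apply Rmin_l.
  assert (Hx3 : x <= exp (ln B / a) / 2) by apply Rmin_r.
  exists x; split; [lra|].
  assert (ln x < ln B / a) by (rewrite <- (ln_exp (ln B / a)); apply ln_increasing; lra).
  assert (a * ln x < ln B).
  { apply Rmult_lt_compat_l with (r := a) in H; auto.
    replace (a * (ln B / a)) with (ln B) in H by (field; lra); auto. }
  rewrite <- (exp_ln B) by auto. apply exp_increasing; auto.
Qed.
Theorem mainTheorem4 (kappa m delta rho1 rho2 : R) (L : R -> R) :
  0 < kappa -> 0 < m -> is_L kappa m L ->
  0 < delta < 1 ->
  0 < rho1 -> rho1 < rho2 -> rho2 < Rmin (R_k kappa) (m * delta) ->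
  L rho2 / L rho1 >=
  / 2 * (Rpower (rho2 / rho1) (sqrt (1 - delta ^ 2) * m)
         - Rpower (rho2 / rho1) (- (sqrt (1 - delta ^ 2) * m))).
Proof.
  intros Hk Hm [[dL [ddL HD]] [Hlim [eps [Heps Hpos]]]] Hd H1 H12 H2.
  set (a := sqrt (1 - delta ^ 2) * m).
  set (rM := Rmin (R_k kappa) (m * delta)).
  assert (Hsq : 0 < sqrt (1 - delta ^ 2)) by (apply sqrt_lt_R0; nra).
  assert (Ha : 0 < a) by (unfold a; nra).
  assert (Ha2 : a * a = m * m - m * m * (delta * delta)).
  { unfold a. replace (sqrt (1 - delta ^ 2) * m * (sqrt (1 - delta ^ 2) * m))
      with (sqrt (1 - delta ^ 2) * sqrt (1 - delta ^ 2) * (m * m)) by ring.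
    rewrite sqrt_sqrt by nra. ring. }
  assert (HrM : forall t, 0 < t < rM -> 0 < t < R_k kappa /\ t < m * delta).
  { intros t Ht. pose proof (Rmin_l (R_k kappa) (m * delta)).
    pose proof (Rmin_r (R_k kappa) (m * delta)). unfold rM in Ht. lra. }
  assert (Hsk : 0 < sqrt kappa) by (apply sqrt_lt_R0; lra).
  assert (Hs : forall t, 0 < t < R_k kappa -> 0 < sin_k kappa t <= t).
  { intros t Ht. unfold sin_k. unfold R_k in Ht.
    assert (Hy : 0 < sqrt kappa * t < PI / 2).
    { split; [nra|]. destruct Ht as [_ Ht].
      apply Rmult_lt_compat_l with (r := sqrt kappa) in Ht; auto.
      replace (sqrt kappa * (PI / (2 * sqrt kappa))) with (PI / 2) in Ht by (field; lra). lra. }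
    pose proof PI_RGT_0.
    assert (0 < sin (sqrt kappa * t)) by (apply sin_gt_0; lra).
    assert (sin (sqrt kappa * t) < sqrt kappa * t) by (apply sin_lt_x; lra).
    split; [apply Rdiv_lt_0_compat; auto|].
    apply Rmult_le_reg_l with (r := sqrt kappa); auto.
    replace (sqrt kappa * (sin (sqrt kappa * t) / sqrt kappa)) with (sin (sqrt kappa * t)) by (field; lra).
    lra. }
  assert (Hsd : forall t, is_derive (sin_k kappa) t (cos_k kappa t)).
  { intros t. unfold sin_k, cos_k. auto_derive; auto. field. lra. }
  set (psi := fun t => sin_k kappa t * dL t - a * L t).
  set (dpsi := fun t => (cos_k kappa t * dL t + sin_k kappa t * ddL t) - a * dL t).
  assert (Hpsid : forall t, 0 < t < R_k kappa -> is_derive psi t (dpsi t)).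
  { intros t Ht. destruct (HD t Ht) as [HdL [HddL _]]. unfold psi, dpsi.
    apply der_minus. apply der_mul; auto.
    replace (a * dL t) with (0 * L t + a * dL t) by ring.
    apply der_mul; auto. auto_derive; auto. }
  assert (Hkey : forall t, 0 < t < rM -> 0 < L t -> psi t < 0 -> 0 <= a * psi t / t + dpsi t).
  { intros t Ht HLt Hpt. destruct (HrM t Ht) as [Ht1 Ht2]. destruct (Hs t Ht1) as [Hs1 Hs2].
    destruct (HD t Ht1) as [_ [_ Hode]].
    set (s := sin_k kappa t) in *.
    assert (Hid : s * (a * psi t / t + dpsi t) - ((m*m - a*a - s*s) * L t + a * psi t * (s / t - 1))
       = s ^ 2 * ddL t + s * cos_k kappa t * dL t + (s ^ 2 - m ^ 2) * L t)
      by (unfold psi, dpsi; fold s; field; lra).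
    rewrite Hode in Hid.
    assert (Hsm : s < m * delta) by lra. assert (Hq : 0 < m*m - a*a - s*s) by (rewrite Ha2; assert (s * s < (m*delta)*(m*delta)) by (apply Rmult_le_0_lt_compat; lra); nra).
    assert (Hst : s / t - 1 <= 0).
    { apply Rmult_le_reg_r with (r := t); [lra|]. replace ((s / t - 1) * t) with (s - t) by (field; lra). lra. }
    assert (H3 : 0 <= a * psi t * (s / t - 1)).
    { assert (HX : a * psi t < 0) by nra. set (X := a * psi t) in *. set (Y := s / t - 1) in *. nra. }
    assert (H4 : 0 <= s * (a * psi t / t + dpsi t)).
    { assert (0 <= (m*m - a*a - s*s) * L t) by nra. lra. }
    assert (H5 : 0 < / s) by (apply Rinv_0_lt_compat; lra).
    replace (a * psi t / t + dpsi t) with (/ s * (s * (a * psi t / t + dpsi t))) by (field; lra).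
    nra. }
  set (P := fun t => exp (a * ln t)).
  set (phi := fun t => P t * psi t).
  set (dphi := fun t => exp (a * ln t) * (a / t) * psi t + P t * dpsi t).
  assert (Hphid : forall t, 0 < t < R_k kappa -> is_derive phi t (dphi t)).
  { intros t Ht. unfold phi, dphi. apply (der_mul P psi t); [apply der_pow; lra | auto]. }
  assert (HRk : forall t, 0 < t < rM -> 0 < t < R_k kappa) by (intros t Ht; apply HrM; auto).
  assert (HrMpos : forall t, 0 < t <= rho2 -> 0 < t < rM) by (intros; unfold rM; lra).
  assert (HPpos : forall t, 0 < P t) by (intro; apply exp_pos).
  destruct (proj1 (filterlim_locally _ _) Hlim (mkposreal 1 Rlt_0_1)) as [d Hdd].
  set (M := Rabs (L 0) + 1).
  assert (HM : 0 < M) by (unfold M; pose proof (Rabs_pos (L 0)); lra).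
  assert (HLb : forall y, 0 < y < d -> L y < M).
  { intros y Hy. assert (B : Rabs (L y + - L 0) < 1).
    { apply (Hdd y); [|lra]. change (Rabs (y + - 0) < d). rewrite Ropp_0, Rplus_0_r, Rabs_right; lra. }
    apply Rabs_def2 in B. unfold M. pose proof (Rle_abs (L 0)). lra. }
  assert (StepA : forall r0, 0 < r0 < rM -> (forall t, 0 < t <= r0 -> 0 < L t) -> 0 <= psi r0).
  { intros r0 Hr0 HL.
    destruct (Rle_or_lt 0 (psi r0)) as [|Hneg]; auto. exfalso.
    set (c := phi r0).
    assert (Hc : c < 0) by (unfold c, phi; pose proof (HPpos r0); nra).
    assert (Hdphi : forall t, 0 < t < r0 -> phi t < 0 -> 0 <= dphi t).
    { intros t Ht Hphit. assert (Hpt : psi t < 0) by (unfold phi in Hphit; pose proof (HPpos t); nra).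
      assert (Ht' : 0 < t < rM) by lra.
      pose proof (Hkey t Ht' (HL t ltac:(lra)) Hpt).
      unfold dphi. replace (exp (a*ln t) * (a/t) * psi t + P t * dpsi t) with (P t * (a * psi t / t + dpsi t)) by (unfold P; field; lra).
      pose proof (HPpos t); nra. }
    assert (Claim1 : forall x, 0 < x <= r0 -> phi x <= c).
    { intros x Hx. destruct (Rle_or_lt (phi x) c) as [|Hgt]; auto. exfalso.
      assert (Hxr : x < r0) by (destruct (Req_dec x r0) as [->|]; [unfold c in Hgt; lra | lra]).
      assert (Hmin : c < Rmin (phi x) 0) by (apply Rmin_glb_lt; lra).
      pose proof (Rmin_l (phi x) 0); pose proof (Rmin_r (phi x) 0).
      set (lam := (c + Rmin (phi x) 0) / 2).
      destruct (last_point (fun t => lam - phi t) x r0 Hxr) as [z [Hz [Hfz Hft]]].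
      + intros t Ht. apply (continuity_pt_minus (fun _ => lam) phi).
        * apply continuity_pt_const; intros ? ?; reflexivity.
        * apply (der_cont _ _ _ (Hphid t ltac:(apply HRk; lra))).
      + unfold lam; lra.
      + unfold lam, c in *; lra.
      + destruct (mvt phi dphi z r0) as [xi [Hxi Heq]]; [lra| intros t Ht; apply Hphid, HRk; lra|].
        assert (Hpx : phi xi < 0) by (pose proof (Hft xi ltac:(lra)); unfold lam in *; lra).
        pose proof (Hdphi xi ltac:(lra) Hpx).
        assert (0 <= dphi xi * (r0 - z)) by nra.
        cbv beta in Hfz. assert (Hc0 : phi r0 = c) by reflexivity. assert (Hl0 : lam = (c + Rmin (phi x) 0) / 2) by reflexivity. clearbody lam c. lra. }
    set (K := - c / 2).
    assert (HK : 0 < K) by (unfold K; lra).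
    pose proof (Rmin_l d r0); pose proof (Rmin_r d r0).
    assert (Hd0 : 0 < d) by apply cond_pos.
    assert (HB1 : 0 < K / (a * M)) by (apply Rdiv_lt_0_compat; nra).
    assert (HB2 : 0 < Rmin d r0) by (apply Rmin_glb_lt; lra).
    destruct (pow_small a (K / (a * M)) (Rmin d r0) Ha HB1 HB2) as [x1 [Hx1 HPx1]].
    assert (Hbound : forall x, 0 < x <= x1 -> P x * sin_k kappa x * dL x <= - K).
    { intros x Hx. pose proof (Claim1 x ltac:(lra)) as Hc1. unfold phi, psi in Hc1.
      assert (HPx : P x < K / (a * M)) by (pose proof (pow_mono a x x1 ltac:(lra) ltac:(lra)); unfold P in *; lra).
      pose proof (HLb x ltac:(lra)). pose proof (HL x ltac:(lra)). pose proof (HPpos x).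
      assert (HPL : P x * L x <= K / (a * M) * M) by (apply Rmult_le_compat; lra).
      replace (K / (a * M) * M) with (K / a) in HPL by (field; lra).
      assert (HaPL : a * (P x * L x) <= K).
      { apply Rmult_le_compat_l with (r := a) in HPL; [|lra]. replace (a * (K / a)) with K in HPL by (field; lra). lra. }
      unfold K in *. nra. }
    set (h := fun t => L t - (fun _ => K / a) t * (fun t => exp (- (a * ln t))) t).
    set (dh := fun t => dL t - (0 * exp (- (a * ln t)) + K / a * (exp (- (a * ln t)) * (- (a / t))))).
    assert (Hhd : forall t, 0 < t < R_k kappa -> is_derive h t (dh t)).
    { intros t Ht. unfold h, dh. apply der_minus; [apply HD; auto|].
      apply (der_mul (fun _ => K / a) (fun t => exp (- (a * ln t)))).
      - auto_derive; auto.
      - apply der_npow; lra. }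
    assert (Hdh : forall t, 0 < t <= x1 -> dh t <= 0).
    { intros t Ht. pose proof (Hbound t Ht) as Hb.
      assert (Ht' : 0 < t < R_k kappa) by (apply HRk; lra).
      destruct (Hs t Ht') as [Hs1 Hs2]. pose proof (HPpos t) as Hp.
      set (s := sin_k kappa t) in *.
      assert (HdL : dL t < 0).
      { destruct (Rlt_or_le (dL t) 0) as [|Hge]; auto.
        assert (0 <= P t * s * dL t) by (apply Rmult_le_pos; [apply Rmult_le_pos|]; lra). lra. }
      assert (HPd : P t * dL t < 0) by (apply Rmult_pos_neg; lra).
      assert (HtP : t * P t * dL t <= - K).
      { assert (0 <= (t - s) * (- (P t * dL t))) by (apply Rmult_le_pos; lra). nra. }
      assert (Hexp : exp (- (a * ln t)) * P t = 1) by (unfold P; rewrite exp_Ropp; field; apply Rgt_not_eq, exp_pos).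
      assert (Hmm : dh t * (t * P t) = t * P t * dL t + K * (exp (- (a * ln t)) * P t)) by (unfold dh; field; lra).
      rewrite Hexp in Hmm.
      assert (dh t * (t * P t) <= 0) by lra.
      assert (0 < t * P t) by nra. nra. }
    assert (Hlow : forall x, 0 < x < x1 -> K / a * exp (- (a * ln x)) < M - h x1).
    { intros x Hx. destruct (mvt h dh x x1) as [xi [Hxi Heq]]; [lra| intros t Ht; apply Hhd, HRk; lra|].
      pose proof (Hdh xi ltac:(lra)).
      assert (h x1 <= h x) by nra.
      pose proof (HLb x ltac:(lra)) as HLx. assert (Hhx : h x = L x - K / a * exp (- (a * ln x))) by reflexivity. lra. }
    assert (HD0 : 0 < M - h x1).
    { pose proof (Hlow (x1/2) ltac:(lra)). pose proof (exp_pos (- (a * ln (x1/2)))).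
      assert (0 < K / a) by (apply Rdiv_lt_0_compat; lra). nra. }
    assert (HB : 0 < K / a / (M - h x1)) by (apply Rdiv_lt_0_compat; [apply Rdiv_lt_0_compat|]; lra).
    destruct (pow_small a (K / a / (M - h x1)) x1 Ha HB ltac:(lra)) as [x [Hx HPx]].
    pose proof (Hlow x Hx) as Hl. rewrite exp_Ropp in Hl.
    pose proof (exp_pos (a * ln x)) as Hp.
    set (p := exp (a * ln x)) in *. set (D := M - h x1) in *.
    assert (K / a < D * p).
    { apply Rmult_lt_compat_r with (r := p) in Hl; auto.
      replace (K / a * / p * p) with (K / a) in Hl by (field; lra). lra. }
    assert (p * D < K / a).
    { apply Rmult_lt_compat_r with (r := D) in HPx; auto.
      replace (K / a / D * D) with (K / a) in HPx by (field; lra). lra. }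
    lra. }
  assert (HLpos : forall t, 0 < t < rM -> 0 < L t).
  { intros x Hx. destruct (Rlt_or_le 0 (L x)) as [|HLx]; auto. exfalso.
    pose proof (Rmin_l eps x); pose proof (Rmin_r eps x).
    assert (Hm0 : 0 < Rmin eps x) by (apply Rmin_glb_lt; lra).
    set (x0 := Rmin eps x / 2).
    assert (Hx0 : 0 < L x0) by (apply Hpos; unfold x0; lra).
    destruct (first_point L x0 x) as [z [Hz [HLz Hlt]]]; auto.
    { unfold x0; lra. }
    { intros t Ht. apply (der_cont _ _ (dL t)). apply HD, HRk. unfold x0 in Ht; lra. }
    destruct (mvt L dL x0 z) as [xi [Hxi Heq]]; [lra| intros t Ht; apply HD, HRk; unfold x0 in Ht; lra|].
    assert (Hxi' : 0 < xi < rM) by (unfold x0 in *; lra).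
    assert (Hps : 0 <= psi xi).
    { apply StepA; auto. intros t Ht. destruct (Rlt_or_le t x0).
      - apply Hpos; unfold x0 in *; lra.
      - apply Hlt; lra. }
    pose proof (Hlt xi ltac:(lra)) as HLxi.
    destruct (Hs xi (HRk xi Hxi')) as [Hs1 Hs2].
    unfold psi in Hps.
    assert (HdL : 0 < dL xi).
    { destruct (Rlt_or_le 0 (dL xi)) as [|Hle]; auto.
      assert (0 < a * L xi) by (apply Rmult_lt_0_compat; lra).
      assert (0 <= sin_k kappa xi * (- dL xi)) by (apply Rmult_le_pos; lra). lra. }
    assert (0 < dL xi * (z - x0)) by (apply Rmult_lt_0_compat; lra).
    lra. }
  set (g := fun t => L t * exp (- (a * ln t))).
  set (dg := fun t => dL t * exp (- (a * ln t)) + L t * (exp (- (a * ln t)) * (- (a / t)))).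
  destruct (mvt g dg rho1 rho2) as [xi [Hxi Heq]]; auto.
  { intros t Ht. unfold g, dg. apply (der_mul L (fun t => exp (- (a * ln t)))).
    - apply HD, HRk, HrMpos; lra.
    - apply der_npow; lra. }
  assert (Hxi' : 0 < xi < rM) by (apply HrMpos; lra).
  pose proof (HLpos xi Hxi') as HLxi.
  pose proof (StepA xi Hxi' (fun t Ht => HLpos t ltac:(lra))) as Hps.
  destruct (Hs xi (HRk xi Hxi')) as [Hs1 Hs2]. unfold psi in Hps.
  assert (HaL : 0 < a * L xi) by (apply Rmult_lt_0_compat; lra).
  assert (HdL : 0 < dL xi).
  { destruct (Rlt_or_le 0 (dL xi)) as [|Hle]; auto.
    assert (0 <= sin_k kappa xi * (- dL xi)) by (apply Rmult_le_pos; lra). lra. }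
  assert (Htd : a * L xi <= xi * dL xi).
  { assert (0 <= (xi - sin_k kappa xi) * dL xi) by (apply Rmult_le_pos; lra). lra. }
  pose proof (exp_pos (- (a * ln xi))) as He.
  assert (Hdg : 0 <= dg xi).
  { assert (Hx : dg xi * xi = exp (- (a * ln xi)) * (xi * dL xi - a * L xi)) by (unfold dg; field; lra).
    assert (0 <= exp (- (a * ln xi)) * (xi * dL xi - a * L xi)) by (apply Rmult_le_pos; lra).
    destruct (Rlt_or_le (dg xi) 0) as [Hn|]; auto.
    assert (dg xi * xi < 0) by (apply Rmult_neg_pos; lra). lra. }
  assert (Hg : g rho1 <= g rho2).
  { assert (0 <= dg xi * (rho2 - rho1)) by (apply Rmult_le_pos; lra). lra. }
  unfold g in Hg. rewrite !exp_Ropp in Hg.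
  pose proof (HLpos rho1 (HrMpos rho1 ltac:(lra))) as HL1.
  pose proof (HLpos rho2 (HrMpos rho2 ltac:(lra))) as HL2.
  unfold Rpower. rewrite ln_div by lra.
  replace (a * (ln rho2 - ln rho1)) with (a * ln rho2 + - (a * ln rho1)) by ring.
  rewrite exp_plus, exp_Ropp.
  pose proof (exp_pos (a * ln rho1)) as E1. pose proof (exp_pos (a * ln rho2)) as E2.
  pose proof (exp_pos (- a * (ln rho2 - ln rho1))) as E3.
  set (e1 := exp (a * ln rho1)) in *. set (e2 := exp (a * ln rho2)) in *.
  set (y := exp (- a * (ln rho2 - ln rho1))) in *.
  assert (Hr : e2 * / e1 <= L rho2 / L rho1).
  { apply Rmult_le_compat_r with (r := e2 / L rho1) in Hg; [|apply Rlt_le, Rdiv_lt_0_compat; lra].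
    replace (L rho1 * / e1 * (e2 / L rho1)) with (e2 * / e1) in Hg by (field; lra).
    replace (L rho2 * / e2 * (e2 / L rho1)) with (L rho2 / L rho1) in Hg by (field; lra). lra. }
  assert (0 < e2 * / e1) by (apply Rmult_lt_0_compat; [lra| apply Rinv_0_lt_compat; lra]).
  lra.
Qed.
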